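(* Under Assumption 1, for every $i\in M$ and admissible profile $a=(a_i,a_{-i})$: (1) for $j\ne i$, $D_{j,i}(a)$ depends only on $a_{-i}$; (2) $D_{i,i}(a)=\tilde a_{i,i}+\sum_{k\in M\setminus\{i\}}\tilde a_{k,i}D_{k,i}(a_{-i})<1$; (3) $$\pi_i(a)=\varepsilon_i\,\frac{a_{0,i}+\sum_{j\in M\setminus\{i\}}a_{0,j}D_{j,i}(a_{-i})}{1-\tilde a_{i,i}-\sum_{k\in M\setminus\{i\}}\tilde a_{k,i}D_{k,i}(a_{-i})};$$ (4) $\pi_i$ is continuous and quasi-concave in $a_i\in S_i(b)$.
   Context: Household $0$, firms $M$, $N=M\cup\{0\}$; sectors with $M_0=\{0\}$ (labor) and $M_\ell$ the firms of sector $\ell$. Consumption shares $a_0\in\mathbb{R}^M_{++}$ summing to $1$; firm $i$ has requirements $b_i\ge0$, $\sum_\ell b_{i,\ell}\le1$, $b_{i,0}>0$, and strategy set $S_i(b)=\{a_i\in\mathbb{R}^N_+:\sum_{j\in M_\ell}a_{i,j}=b_{i,\ell}\ \forall\ell\}$; $\varepsilon_i=1-\sum_\ell b_{i,\ell}$. Equilibrium profit $\pi_i(a)=\varepsilon_i\bar v_i$, where $\bar v$ solves $\bar v_j=a_{0,j}+a_{0,j}\sum_i\varepsilon_i\bar v_i+\sum_ia_{i,j}\bar v_i$ ($j\in M$), $\sum_ia_{i,0}\bar v_i=1$. For $i,j\in M$, $\tilde a_{j,i}:=a_{i,j}+\varepsilon_ia_{0,j}$. A walk $(h_1,\dots,h_k)\in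 M^k$ has weight $\prod_{t=1}^{k-1}\tilde a_{h_{t+1},h_t}$. A direct walk from $j$ to $i$ is a walk with $k\ge2$, $h_1=j$, $h_k=i$ and $h_t\ne i$ for $2\le t\le k-1$; a direct walk from $i$ to $i$ is a direct cycle. $D_{j,i}(a)$ is the sum of weights of direct walks from $j$ to $i$ (for $j=i$: of direct cycles around $i$). Assumption 1: $a_0\in\mathbb{R}^M_{++}$, $b_{i,0}>0$ for all $i$, some firm has a positive non-labor requirement. *)

(* Defs.v *)
From HB Require Import structures.
From mathcomp Require Import all_boot all_order all_algebra.
From mathcomp Require Import all_classical all_reals all_analysis.
From Stdlib Require Import ClassicalEpsilon.
Set Implicit Arguments. Unset Strict Implicit. Unset Printing Implicit Defensive.
Import Order.TTheory GRing.Theory Num.Theory.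
Import numFieldNormedType.Exports.
Local Open Scope ring_scope.

(* Firms: M = 'I_m.  Agents/goods: N = 'I_m.+1, where ord0 is the household
   (labor, index 0) and firm k : 'I_m is identified with [lift ord0 k].
   Sectors: 'I_L.+1, sector ord0 being labor (M_0 = {0});
   [sec : 'I_m.+1 -> 'I_L.+1] assigns each element of N to its sector,
   so M_l = [pred j | sec j == l].
   a0 : 'I_m -> R   household consumption shares.
   b  : 'I_m -> 'I_L.+1 -> R   requirements b_{i,l}.
   A profile is a : 'I_m -> 'rV[R]_(m.+1); a i = a_i in R^N,
   a_{i,j} = a i 0 (lift ord0 j) for j in M and a_{i,0} = a i 0 ord0. *)

Section Model.
Variables (R : realType) (m L : nat).
Variable (sec : 'I_m.+1 -> 'I_L.+1).
Variables (a0 : 'I_m -> R) (b : 'I_m -> 'I_L.+1 -> R).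

Definition firm (j : 'I_m) : 'I_m.+1 := lift ord0 j.

Definition strat (i : 'I_m) : set 'rV[R]_(m.+1) :=
  [set x | (forall j, 0 <= x 0 j) /\
           (forall l : 'I_L.+1, \sum_(j | sec j == l) x 0 j = b i l)]%classic.

Definition admissible (a : 'I_m -> 'rV[R]_(m.+1)) : Prop :=
  forall i, strat i (a i).

Definition eps (i : 'I_m) : R := 1 - \sum_(l : 'I_L.+1) b i l.

Definition upd (a : 'I_m -> 'rV[R]_(m.+1)) (i : 'I_m) (x : 'rV[R]_(m.+1)) :
  'I_m -> 'rV[R]_(m.+1) := fun k => if k == i then x else a k.

Definition atil (a : 'I_m -> 'rV[R]_(m.+1)) (j i : 'I_m) : R :=
  a i 0 (firm j) + eps i * a0 j.

(* Weight of a walk (h_1,...,h_k) with k = n.+2, given as w : 'I_(n.+2) -> 'I_m: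
   prod_{t=1}^{k-1} atil h_{t+1} h_t. *)
Definition walk_weight (a : 'I_m -> 'rV[R]_(m.+1)) (n : nat)
    (w : {ffun 'I_(n.+2) -> 'I_m}) : R :=
  \prod_(t < n.+1) atil a (w (lift ord0 t)) (w (widen_ord (leqnSn n.+1) t)).

Definition direct_walk (j i : 'I_m) (n : nat) (w : {ffun 'I_(n.+2) -> 'I_m}) : bool :=
  [&& w ord0 == j, w ord_max == i &
      [forall t : 'I_(n.+2), ((0 < t)%N && (t < n.+1)%N) ==> (w t != i)]].

Definition Dlen (a : 'I_m -> 'rV[R]_(m.+1)) (j i : 'I_m) (n : nat) : R :=
  \sum_(w : {ffun 'I_(n.+2) -> 'I_m} | direct_walk j i w) walk_weight a w.

Definition D (a : 'I_m -> 'rV[R]_(m.+1)) (j i : 'I_m) : \bar R :=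
  (\sum_(n <oo) (Dlen a j i n)%:E)%E.

Definition eq_values (a : 'I_m -> 'rV[R]_(m.+1)) (v : 'I_m -> R) : Prop :=
  (forall j : 'I_m,
      v j = a0 j + a0 j * (\sum_(i : 'I_m) eps i * v i)
            + \sum_(i : 'I_m) a i 0 (firm j) * v i) /\
  \sum_(i : 'I_m) a i 0 ord0 * v i = 1.

Definition vbar (a : 'I_m -> 'rV[R]_(m.+1)) : 'I_m -> R :=
  epsilon (inhabits (fun _ => 0)) (eq_values a).

Definition profit (a : 'I_m -> 'rV[R]_(m.+1)) (i : 'I_m) : R := eps i * vbar a i.

End Model.

Definition quasi_concave_on (R : realType) (n : nat)
    (S : set 'rV[R]_n) (f : 'rV[R]_n -> R) : Prop :=
  forall x y (t : R), S x -> S y -> 0 <= t -> t <= 1 ->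
    Num.min (f x) (f y) <= f (t *: x + (1 - t) *: y).

(* Main.v *)
Require Import Defs.
From HB Require Import structures.
From mathcomp Require Import all_boot all_order all_algebra.
From mathcomp Require Import all_classical all_reals all_analysis.
From mathcomp Require Import ring lra.
From Stdlib Require Import ClassicalEpsilon.
Set Implicit Arguments. Unset Strict Implicit. Unset Printing Implicit Defensive.
Import Order.TTheory GRing.Theory Num.Theory.
Import numFieldNormedType.Exports.
Local Open Scope ring_scope.

Section Walks.
Variables (R : realType) (m L : nat) (a0 : 'I_m -> R) (b : 'I_m -> 'I_L.+1 -> R)
  (a : 'I_m -> 'rV[R]_(m.+1)).

Definition hcons n (j : 'I_m) (u : {ffun 'I_n.+2 -> 'I_m}) : {ffun 'I_n.+3 -> 'I_m} :=
  [ffun t : 'I_n.+3 => if nat_of_ord t is s.+1 then u (inord s) else j].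
Definition htl n (w : {ffun 'I_n.+3 -> 'I_m}) : {ffun 'I_n.+2 -> 'I_m} :=
  [ffun t => w (lift ord0 t)].

Lemma htl_hcons n j u : htl (@hcons n j u) = u.
Proof. by apply/ffunP => t; rewrite !ffunE lift0 /= inord_val. Qed.

Lemma hcons_htl n j (w : {ffun 'I_n.+3 -> 'I_m}) : w ord0 = j -> hcons j (htl w) = w.
Proof.
move=> w0; apply/ffunP => t; rewrite !ffunE.
case: t => [[|s] Hs] /=; first by rewrite -w0; congr (w _); apply: val_inj.
rewrite ffunE; congr (w _); apply: val_inj; rewrite /= inordK //.
Qed.

Lemma hcons0 n j u : @hcons n j u ord0 = j.
Proof. by rewrite ffunE. Qed.
Lemma hconsS n j u (s : 'I_n.+2) : @hcons n j u (lift ord0 s) = u s.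
Proof. by rewrite ffunE lift0 inord_val. Qed.
Lemma hcons_max n j u : @hcons n j u ord_max = u ord_max.
Proof. by rewrite -(hconsS j u); congr (_ _); apply: val_inj. Qed.

Lemma dw_hcons n j i k (u : {ffun 'I_n.+2 -> 'I_m}) :
  direct_walk j i (hcons j u) && (hcons j u (lift ord0 ord0) == k) =
  (k != i) && direct_walk k i u.
Proof.
rewrite /direct_walk hcons0 hcons_max hconsS eqxx.
case E0: (u ord0 == k); last by rewrite andbF andFb andbF.
move/eqP: E0 => E0; rewrite andbT andTb.
apply/idP/idP.
- move=> /andP[-> /forallP H].
  have := H (lift ord0 ord0); rewrite hconsS E0 => /implyP -> //.
  rewrite !andTb; apply/forallP => t; apply/implyP => /andP[t0 tn].
  have := H (lift ord0 t); rewrite hconsS => /implyP; apply.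
  by rewrite lift0 ltn0Sn ltnS tn.
- move=> /and4P[ki _ -> /forallP H]; rewrite andTb.
  apply/forallP => t; apply/implyP.
  have [->|/negbTE t0] := eqVneq t ord0; first by rewrite ltnn.
  move=> /andP[tpos tn].
  have Ht : t = lift ord0 (inord t.-1 : 'I_n.+2).
    apply: val_inj; rewrite /= inordK.
      by rewrite /bump leq0n add1n prednK.
    exact: leq_ltn_trans (leq_pred t) tn.
  rewrite Ht hconsS.
  have [E|] := eqVneq (inord t.-1 : 'I_n.+2) ord0; first by rewrite E E0.
  move=> Hn; have := H (inord t.-1); move/implyP; apply.
  rewrite lt0n; apply/andP; split.
    by apply: contra Hn => /eqP E; apply/eqP/val_inj.
  by rewrite inordK -ltnS prednK // ltnW.
Qed.

Lemma Dlen0 j i : Dlen a0 b a j i 0 = atil a0 b a i j.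
Proof.
rewrite /Dlen (big_pred1 [ffun t : 'I_2 => if nat_of_ord t is 0 then j else i]).
  rewrite /walk_weight big_ord1 !ffunE /=; done.
move=> w; rewrite /direct_walk /=; apply/idP/eqP.
- move=> /and3P[/eqP w0 /eqP w1 _]; apply/ffunP => t; rewrite ffunE.
  case: t => [[|[|s]] Hs] //=.
  + by rewrite -w0; congr (w _); apply: val_inj.
  + by rewrite -w1; congr (w _); apply: val_inj.
- move=> ->; apply/and3P; split; rewrite ?ffunE //.
  by apply/forallP => t; apply/implyP; case: t => [[|[|s]] Hs].
Qed.

Lemma DlenS j i n :
  Dlen a0 b a j i n.+1 = \sum_(k | k != i) atil a0 b a k j * Dlen a0 b a k i n.
Proof.
rewrite /Dlen (partition_big (fun w : {ffun 'I_n.+3 -> 'I_m} => w (lift ord0 ord0)) predT) //=.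
rewrite [RHS]big_mkcond /=; apply: eq_bigr => k _.
rewrite (reindex_onto (@hcons n j) (@htl n)); last first.
  by move=> w /andP[/and3P[/eqP w0 _ _] _]; rewrite hcons_htl.
under eq_bigl => u do rewrite htl_hcons eqxx andbT dw_hcons.
case: ifP => ki /=; last by rewrite big_pred0.
rewrite mulr_sumr; apply: eq_bigr => u /and3P[/eqP u0 _ _].
rewrite /walk_weight big_ord_recl.
have -> : widen_ord (leqnSn n.+2) ord0 = ord0 :> 'I_n.+3 by apply: val_inj.
rewrite hconsS hcons0 u0; congr (_ * _); apply: eq_bigr => t _.
have -> : widen_ord (leqnSn n.+2) (lift ord0 t) = lift ord0 (widen_ord (leqnSn n.+1) t).
  by apply: val_inj.
by rewrite !hconsS.
Qed.

End Walks.

Section Main.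
Variables (R : realType) (m L : nat) (sec : 'I_m.+1 -> 'I_L.+1)
  (a0 : 'I_m -> R) (b : 'I_m -> 'I_L.+1 -> R).
Hypotheses (Hsec : forall j : 'I_m.+1, (sec j == ord0) = (j == ord0))
  (Ha0pos : forall j, 0 < a0 j) (Ha0sum : \sum_j a0 j = 1)
  (Hbge0 : forall i l, 0 <= b i l) (Hbsum : forall i, \sum_l b i l <= 1)
  (Hblab : forall i, 0 < b i ord0).

Lemma eps_ge0 i : 0 <= eps b i.
Proof. by rewrite /eps subr_ge0. Qed.

Lemma b0_le_sum i : b i ord0 <= \sum_l b i l.
Proof.
rewrite (bigD1 ord0) //= lerDl; exact: sumr_ge0.
Qed.

Lemma b0_le1 i : b i ord0 <= 1.
Proof. exact: le_trans (b0_le_sum i) (Hbsum i). Qed.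

Lemma strat_lab i x : strat sec b i x -> x 0 ord0 = b i ord0.
Proof.
by case=> _ H; rewrite -(H ord0) (big_pred1 ord0).
Qed.

Lemma strat_firms i x : strat sec b i x ->
  \sum_k x 0 (firm k) = \sum_l b i l - b i ord0.
Proof.
move=> Sx; have E : \sum_(j : 'I_m.+1) x 0 j = \sum_l b i l.
  rewrite (partition_big sec predT) //=; apply: eq_bigr => l _.
  by case: Sx => _ H; rewrite -(H l).
by rewrite -E big_ord_recl (strat_lab Sx) /firm; ring.
Qed.

Lemma atil_ge0 a k j : admissible sec b a -> 0 <= atil a0 b a k j.
Proof.
move=> Ha; rewrite /atil addr_ge0 //; first by case: (Ha j) => H _; exact: H.
by rewrite mulr_ge0 ?eps_ge0 // ltW.
Qed.

Lemma colsum a j : admissible sec b a -> \sum_k atil a0 b a k j = 1 - b j ord0.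
Proof.
move=> Ha; rewrite /atil big_split /= -mulr_sumr Ha0sum mulr1 (strat_firms (Ha j)).
by rewrite /eps; ring.
Qed.

Lemma Dlen_ge0 a j i n : admissible sec b a -> 0 <= Dlen a0 b a j i n.
Proof.
move=> Ha; apply: sumr_ge0 => w _; apply: prodr_ge0 => t _; exact: atil_ge0.
Qed.

Lemma psum_le a i N j : admissible sec b a ->
  \sum_(n < N) Dlen a0 b a j i n <= 1 - b j ord0.
Proof.
move=> Ha; elim: N j => [|N IH] j.
  by rewrite big_ord0 subr_ge0 b0_le1.
rewrite big_ord_recl Dlen0.
under eq_bigr => n _ do rewrite lift0 DlenS.
rewrite exchange_big /=.
under eq_bigr => k _ do rewrite -mulr_sumr.
rewrite -(colsum j Ha) [X in _ <= X](bigD1 i) //= lerD2l.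
apply: ler_sum => k _; apply: ler_piMr; first exact: atil_ge0.
apply: le_trans (IH k) _; by rewrite lerBlDr lerDl ltW.
Qed.


Local Open Scope ereal_scope.

Lemma D_ge0 a j i : admissible sec b a -> 0 <= D a0 b a j i.
Proof.
move=> Ha; apply: nneseries_ge0 => n _ _; rewrite lee_fin; exact: Dlen_ge0.
Qed.

Lemma D_le a j i : admissible sec b a -> D a0 b a j i <= (1 - b j ord0)%:E.
Proof.
move=> Ha; rewrite /D; apply: lime_le.
  by apply: is_cvg_nneseries => n _ _; rewrite lee_fin; exact: Dlen_ge0.
apply: nearW => N; rewrite sumEFin lee_fin big_mkord; exact: psum_le.
Qed.

Lemma D_fin a j i : admissible sec b a -> D a0 b a j i = (fine (D a0 b a j i))%:E.
Proof.
move=> Ha; rewrite fineK // ge0_fin_numE ?D_ge0 //.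
exact: le_lt_trans (D_le j i Ha) (ltry _).
Qed.

Lemma D_rec a j i : admissible sec b a ->
  D a0 b a j i = (atil a0 b a i j)%:E +
     \sum_(k | k != i) (atil a0 b a k j)%:E * D a0 b a k i.
Proof.
move=> Ha; rewrite /D nneseries_recl //; last first.
  by move=> n _; rewrite lee_fin; exact: Dlen_ge0.
rewrite Dlen0; congr (_ + _).
rewrite -nneseries_addn; last by move=> n; rewrite lee_fin; exact: Dlen_ge0.
under eq_eseriesr => n _ do rewrite addn1 DlenS -sumEFin.
rewrite nneseries_sum; last first.
  by move=> k n _; rewrite lee_fin mulr_ge0 ?atil_ge0 ?Dlen_ge0.
apply: eq_bigr => k _.
under eq_eseriesr => n _ do rewrite EFinM.
rewrite nneseriesZl //; move=> n _; rewrite lee_fin; exact: Dlen_ge0.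
Qed.

Local Close Scope ereal_scope.

Lemma D_rec_fin a j i : admissible sec b a ->
  fine (D a0 b a j i) = atil a0 b a i j +
     \sum_(k | k != i) atil a0 b a k j * fine (D a0 b a k i).
Proof.
move=> Ha; apply: EFin_inj; rewrite -D_fin // D_rec // [in RHS]EFinD -sumEFin.
congr (_ + _)%E; apply: eq_bigr => k _; rewrite EFinM -D_fin //.
Qed.

Lemma Dfin_le a j i : admissible sec b a -> fine (D a0 b a j i) <= 1 - b j ord0.
Proof. move=> Ha; by rewrite -lee_fin -D_fin // D_le. Qed.

Lemma Dfin_ge0 a j i : admissible sec b a -> 0 <= fine (D a0 b a j i).
Proof. move=> Ha; by rewrite -lee_fin -D_fin // D_ge0. Qed.

Lemma atil_upd a i x k j : j != i -> atil a0 b (upd a i x) k j = atil a0 b a k j.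
Proof. by move=> ji; rewrite /atil /upd (negbTE ji). Qed.

Lemma atil_upd_i a i x k : atil a0 b (upd a i x) k i = x 0 (firm k) + eps b i * a0 k.
Proof. by rewrite /atil /upd eqxx. Qed.

Lemma Dlen_upd a i x n j : j != i -> Dlen a0 b (upd a i x) j i n = Dlen a0 b a j i n.
Proof.
elim: n j => [|n IH] j ji; first by rewrite !Dlen0 atil_upd.
rewrite !DlenS; apply: eq_bigr => k ki; by rewrite atil_upd // IH.
Qed.

Lemma D_upd a i x j : j != i -> D a0 b (upd a i x) j i = D a0 b a j i.
Proof.
move=> ji; rewrite /D; apply: eq_eseriesr => n _; by rewrite Dlen_upd.
Qed.

Lemma upd_adm a i x : admissible sec b a -> strat sec b i x ->
  admissible sec b (upd a i x).
Proof. by move=> Ha Sx k; rewrite /upd; case: eqP => [->|_]. Qed.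

Lemma key_identity (t : 'I_m -> 'I_m -> R) (c v d : 'I_m -> R) i :
  (forall j, v j = c j + \sum_k t j k * v k) ->
  (forall j, d j = t i j + \sum_(k | k != i) t k j * d k) ->
  (1 - d i) * v i = c i + \sum_(j | j != i) c j * d j.
Proof.
move=> hv hd.
have S1 : \sum_j c j * d j = \sum_j v j * d j - \sum_k v k * \sum_j t j k * d j.
  under eq_bigr => j _ do rewrite (_ : c j = v j - \sum_k t j k * v k) ?[in RHS](hv j) ?addrK //.
  under eq_bigr => j _ do rewrite mulrBl mulr_suml.
  rewrite sumrB; congr (_ - _); rewrite exchange_big /=; apply: eq_bigr => k _.
  rewrite mulr_sumr; apply: eq_bigr => j _; ring.
have S2 : forall k, \sum_j t j k * d j = t i k * d i + d k - t i k.
  move=> k; rewrite (bigD1 i) //= (hd k); ring.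
have S3 : \sum_j c j * d j = (1 - d i) * (v i - c i).
  rewrite S1; under [X in _ - X]eq_bigr => k _ do rewrite S2.
  rewrite [in RHS](hv i) [c i + _]addrC addrK mulr_sumr -sumrB; apply: eq_bigr => k _; ring.
move: S3; rewrite (bigD1 i) //= => S3.
have -> : \sum_(j | j != i) c j * d j = (1 - d i) * (v i - c i) - c i * d i.
  by rewrite -S3; ring.
ring.
Qed.

Lemma atil_sum_eq a v j :
  \sum_k atil a0 b a j k * v k =
  a0 j * (\sum_k eps b k * v k) + \sum_k a k 0 (firm j) * v k.
Proof.
rewrite /atil mulr_sumr -big_split /=; apply: eq_bigr => k _; ring.
Qed.

Lemma sol_form_inv a v : eq_values a0 b a v ->
  forall j, v j = a0 j + \sum_k atil a0 b a j k * v k.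
Proof. by case=> H _ j; rewrite atil_sum_eq GRing.addrA -H. Qed.

Lemma sol_form a v : admissible sec b a ->
  (forall j, v j = a0 j + \sum_k atil a0 b a j k * v k) -> eq_values a0 b a v.
Proof.
move=> Ha hv; split; first by move=> j; rewrite -GRing.addrA -atil_sum_eq -hv.
have E : \sum_j v j = 1 + \sum_k v k * (1 - b k ord0).
  under [in RHS]eq_bigr => k _ do rewrite -(colsum k Ha) mulr_sumr.
  rewrite -{1}Ha0sum [in RHS](exchange_big) -big_split /=; apply: eq_bigr => j _.
  rewrite [LHS]hv; congr (_ + _); apply: eq_bigr => k _; ring.
have E2 : \sum_k v k * (1 - b k ord0) = \sum_k v k - \sum_k b k ord0 * v k.
  rewrite -sumrB; apply: eq_bigr => k _; ring.
under eq_bigr => k _ do rewrite (strat_lab (Ha k)).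
move: E; rewrite E2 => E; lra.
Qed.

Lemma exists_sol a : admissible sec b a -> exists v, eq_values a0 b a v.
Proof.
move=> Ha.
pose B : 'M[R]_m := \matrix_(k, j) atil a0 b a j k.
pose A : 'M[R]_m := 1%:M - B.
have detA : \det A != 0.
  apply/negP => /det0P [u u0 uA].
  have hu : forall j, u 0 j = \sum_k u 0 k * atil a0 b a j k.
    move=> j; have := congr1 (fun M : 'rV[R]_m => M 0 j) uA.
    rewrite /A mulmxBr mulmx1 !mxE; move/eqP; rewrite subr_eq0; move/eqP => E.
    apply: (etrans E); by apply: eq_bigr => k _; rewrite /B !mxE.
  have le1 : \sum_j `|u 0 j| <= \sum_k `|u 0 k| * (1 - b k ord0).
    under [X in _ <= X]eq_bigr => k _ do rewrite -(colsum k Ha) mulr_sumr.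
    rewrite [X in _ <= X]exchange_big /=; apply: ler_sum => j _.
    rewrite hu; apply: le_trans (ler_norm_sum _ _ _) _; apply: ler_sum => k _.
    by rewrite normrM (ger0_norm (atil_ge0 _ _ Ha)) mulrC.
  have le2 : \sum_k `|u 0 k| * b k ord0 <= 0.
    move: le1; under [X in _ <= X]eq_bigr => k _ do rewrite mulrBr mulr1.
    rewrite sumrB; lra.
  have z : forall k, `|u 0 k| * b k ord0 = 0.
    move=> k; apply: (@psumr_eq0P _ _ predT (fun k => `|u 0 k| * b k ord0)) => //.
      by move=> k' _; rewrite mulr_ge0 ?normr_ge0 // ltW.
    by apply/eqP; rewrite eq_le le2 sumr_ge0 // => k' _; rewrite mulr_ge0 ?normr_ge0 // ltW.
  move/negP: u0; apply; apply/eqP/matrixP => r k; rewrite (ord1 r) mxE.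
  have := z k; move/eqP; rewrite mulf_eq0 normr_eq0 (gt_eqF (Hblab k)) orbF.
  by move/eqP.
pose v := \row_j a0 j *m invmx A.
have vA : v *m A = \row_j a0 j by rewrite mulmxKV // unitmxE unitfE.
clearbody v.
exists (fun j => v 0 j); apply: sol_form => // j.
have := congr1 (fun M : 'rV[R]_m => M 0 j) vA.
rewrite /A mulmxBr mulmx1 !mxE => <-.
have -> : \sum_k atil a0 b a j k * v 0 k = \sum_k v 0 k * B k j.
  by apply: eq_bigr => k _; rewrite /B mxE mulrC.
by rewrite subrK.
Qed.

Lemma vbar_spec a : admissible sec b a ->
  forall j, vbar a0 b a j = a0 j + \sum_k atil a0 b a j k * vbar a0 b a k.
Proof.
move=> Ha; apply: sol_form_inv; rewrite /vbar; apply: epsilon_spec.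
exact: exists_sol.
Qed.

Lemma den_pos a i : admissible sec b a -> 0 < 1 - fine (D a0 b a i i).
Proof.
move=> Ha; have := Dfin_le i i Ha; have := Hblab i; lra.
Qed.

Lemma profit_formula a i : admissible sec b a ->
  profit a0 b a i = eps b i * (a0 i + \sum_(j | j != i) a0 j * fine (D a0 b a j i))
    / (1 - atil a0 b a i i - \sum_(k | k != i) atil a0 b a k i * fine (D a0 b a k i)).
Proof.
move=> Ha.
have den : 1 - atil a0 b a i i - \sum_(k | k != i) atil a0 b a k i * fine (D a0 b a k i)
   = 1 - fine (D a0 b a i i).
  rewrite [in RHS](D_rec_fin i i Ha); ring.
have key := key_identity (vbar_spec Ha) (fun j => D_rec_fin j i Ha).
rewrite den -key /profit.
have pos := den_pos i Ha.
field; exact: lt0r_neq0.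
Qed.

Lemma strat_convex i x y (t : R) : strat sec b i x -> strat sec b i y ->
  0 <= t -> t <= 1 -> strat sec b i (t *: x + (1 - t) *: y).
Proof.
move=> [x0 xs] [y0 ys] t0 t1; split.
  move=> j; rewrite !mxE addr_ge0 // mulr_ge0 //; lra.
move=> l; under eq_bigr => j _ do rewrite !mxE.
rewrite big_split /= -!mulr_sumr xs ys; ring.
Qed.

Local Open Scope classical_set_scope.

Lemma cont_sum (T : topologicalType) (I : Type) (s : seq I) (P : pred I)
    (F : I -> T -> R) x :
  (forall k, F k @ x --> F k x) ->
  (fun y => \sum_(k <- s | P k) F k y) @ x --> \sum_(k <- s | P k) F k x.
Proof.
move=> HF; elim: s => [|k s IH].
  have -> : (fun y => \sum_(k <- [::] | P k) F k y) = fun _ => 0.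
    by apply/funext => y; rewrite big_nil.
  rewrite big_nil; exact: cvg_cst.
case Pk: (P k).
  have -> : (fun y => \sum_(k0 <- k :: s | P k0) F k0 y)
     = fun y => F k y + \sum_(k0 <- s | P k0) F k0 y.
    by apply/funext => y; rewrite big_cons Pk.
  rewrite big_cons Pk; exact: cvgD.
have -> : (fun y => \sum_(k0 <- k :: s | P k0) F k0 y)
   = fun y => \sum_(k0 <- s | P k0) F k0 y.
  by apply/funext => y; rewrite big_cons Pk.
by rewrite big_cons Pk.
Qed.

Lemma cvgD_cst (T : topologicalType) (f : T -> R) (c : R) x :
  f @ x --> f x -> (fun y => f y + c) @ x --> f x + c.
Proof. by move=> h; apply: cvgD => //; exact: cvg_cst. Qed.

Lemma cvgM_cst (T : topologicalType) (f : T -> R) (c : R) x :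
  f @ x --> f x -> (fun y => f y * c) @ x --> f x * c.
Proof. by move=> h; apply: cvgM => //; exact: cvg_cst. Qed.

Lemma cvg_cst_sub (T : topologicalType) (f : T -> R) x :
  f @ x --> f x -> (fun y => 1 - f y) @ x --> 1 - f x.
Proof. by move=> h; apply: cvgB => //; exact: cvg_cst. Qed.

Lemma cvgB_gen (T : topologicalType) (f g : T -> R) x :
  f @ x --> f x -> g @ x --> g x -> (fun y => f y - g y) @ x --> f x - g x.
Proof. by move=> h1 h2; apply: cvgB. Qed.

Lemma cvg_div_cst (T : topologicalType) (f : T -> R) (c : R) x :
  f x != 0 -> f @ x --> f x -> (fun y => c / f y) @ x --> c / f x.
Proof. by move=> h0 h; apply: cvgM; [exact: cvg_cst | exact: cvgV]. Qed.

Section Part4.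
Variables (a : 'I_m -> 'rV[R]_(m.+1)) (i : 'I_m).
Hypothesis Ha : admissible sec b a.

Let dd k := fine (D a0 b a k i).
Let C := eps b i * (a0 i + \sum_(j | j != i) a0 j * dd j).
Let den (x : 'rV[R]_(m.+1)) := 1 - (x 0 (firm i) + eps b i * a0 i)
   - \sum_(k | k != i) (x 0 (firm k) + eps b i * a0 k) * dd k.
Let g x := C / den x.

Lemma f_eq x : strat sec b i x -> profit a0 b (upd a i x) i = g x.
Proof.
move=> Sx; rewrite profit_formula; last exact: upd_adm.
rewrite /g /C /den /dd !atil_upd_i; congr (_ * (_ + _) / (_ - _)).
  by apply: eq_bigr => j ji; rewrite D_upd.
by apply: eq_bigr => j ji; rewrite D_upd // atil_upd_i.
Qed.

Lemma den_pos_x x : strat sec b i x -> 0 < den x.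
Proof.
move=> Sx; have Hu := upd_adm Ha Sx.
have := den_pos i Hu; rewrite (D_rec_fin i i Hu) /den /dd atil_upd_i.
have -> : \sum_(k | k != i) atil a0 b (upd a i x) k i * fine (D a0 b (upd a i x) k i)
  = \sum_(k | k != i) (x 0 (firm k) + eps b i * a0 k) * fine (D a0 b a k i).
  by apply: eq_bigr => k ki; rewrite atil_upd_i D_upd.
move=> H; lra.
Qed.

Lemma C_ge0 : 0 <= C.
Proof.
apply: mulr_ge0; first exact: eps_ge0.
apply: addr_ge0; first exact: ltW.
apply: sumr_ge0 => j _; apply: mulr_ge0; first exact: ltW.
exact: Dfin_ge0.
Qed.

Lemma den_cont x : den @ x --> den x.
Proof.
have hc : forall k, (fun y : 'rV[R]_(m.+1) => y 0 (firm k) + eps b i * a0 k) @ x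
    --> x 0 (firm k) + eps b i * a0 k.
  move=> k; apply: (@cvgD_cst _ (fun y : 'rV[R]_(m.+1) => y 0 (firm k))).
  exact: (@coord_continuous R 1 m.+1 0 (firm k) x).
have h2 := @cont_sum _ _ (index_enum 'I_m) (fun k => k != i)
   (fun k (y : 'rV[R]_(m.+1)) => (y 0 (firm k) + eps b i * a0 k) * dd k) x
   (fun k => @cvgM_cst _ _ (dd k) _ (hc k)).
exact: cvgB_gen (cvg_cst_sub (hc i)) h2.
Qed.

Lemma g_cont x : den x != 0 -> g @ x --> g x.
Proof. move=> dx; rewrite /g; exact: (cvg_div_cst (c:=C) dx (den_cont (x:=x))). Qed.

Lemma part4_cont :
  {within strat sec b i, continuous (fun x => profit a0 b (upd a i x) i)}%classic.
Proof.
apply: (@subspace_eq_continuous _ _ _ (from_subspace (strat sec b i) g)).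
  by move=> x /set_mem Sx; rewrite /from_subspace f_eq.
apply: continuous_in_subspaceT => x /set_mem Sx.
by apply: g_cont; rewrite lt0r_neq0 // den_pos_x.
Qed.

Lemma part4_qc :
  quasi_concave_on (strat sec b i) (fun x => profit a0 b (upd a i x) i).
Proof.
move=> x y t Sx Sy t0 t1.
have Sz := strat_convex Sx Sy t0 t1.
rewrite !f_eq // /g.
have dz : den (t *: x + (1 - t) *: y) = t * den x + (1 - t) * den y.
  rewrite /den !mxE.
  have -> : \sum_(k | k != i) ((t *: x + (1 - t) *: y) 0 (firm k) + eps b i * a0 k) * dd k
    = t * \sum_(k | k != i) (x 0 (firm k) + eps b i * a0 k) * dd k
      + (1 - t) * \sum_(k | k != i) (y 0 (firm k) + eps b i * a0 k) * dd k.
    rewrite !mulr_sumr -big_split; apply: eq_bigr => k _ /=; rewrite !mxE; ring.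
  ring.
have px := den_pos_x Sx; have py := den_pos_x Sy; have pz := den_pos_x Sz.
have mono : forall d1 d2, 0 < d1 -> d1 <= d2 -> C / d2 <= C / d1.
  move=> d1 d2 p1 d12; apply: ler_wpM2l; first exact: C_ge0.
  by rewrite lef_pV2 // posrE (lt_le_trans p1).
have [hxy|hxy] := leP (den x) (den y).
  rewrite ge_min; apply/orP; right; apply: mono => //.
  rewrite dz; have h : 0 <= t * (den y - den x) by apply: mulr_ge0; lra.
  nra.
rewrite ge_min; apply/orP; left; apply: mono => //.
rewrite dz; have h : 0 <= (1 - t) * (den x - den y) by apply: mulr_ge0; lra.
nra.
Qed.

End Part4.

Lemma main_inner (i : 'I_m) (a : 'I_m -> 'rV[R]_(m.+1)) (Ha : admissible sec b a) :
  (forall x, strat sec b i x -> forall j, j != i ->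
      D a0 b (upd a i x) j i = D a0 b a j i) /\
  (D a0 b a i i = ((atil a0 b a i i)%:E
                   + \sum_(k | k != i) (atil a0 b a k i)%:E * D a0 b a k i)%E
   /\ (D a0 b a i i < 1%:E)%E) /\
  profit a0 b a i =
    eps b i * (a0 i + \sum_(j | j != i) a0 j * fine (D a0 b a j i))
    / (1 - atil a0 b a i i - \sum_(k | k != i) atil a0 b a k i * fine (D a0 b a k i)) /\
  {within strat sec b i, continuous (fun x => profit a0 b (upd a i x) i)}%classic /\
  quasi_concave_on (strat sec b i) (fun x => profit a0 b (upd a i x) i).
Proof.
split; first by move=> x _ j ji; exact: D_upd.
split; first split.
- exact: D_rec.
- apply: le_lt_trans (D_le i i Ha) _; rewrite lte_fin; have := Hblab i; lra.
split; first exact: profit_formula.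
split; [exact: part4_cont | exact: part4_qc].
Qed.

End Main.

Theorem mainTheorem7 (R : realType) (m L : nat) (sec : 'I_m.+1 -> 'I_L.+1)
    (a0 : 'I_m -> R) (b : 'I_m -> 'I_L.+1 -> R)
    (Hsec : forall j : 'I_m.+1, (sec j == ord0) = (j == ord0))
    (Ha0pos : forall j, 0 < a0 j) (Ha0sum : \sum_j a0 j = 1)
    (Hbge0 : forall i l, 0 <= b i l) (Hbsum : forall i, \sum_l b i l <= 1)
    (Hblab : forall i, 0 < b i ord0)
    (Hnonlab : exists i l, l != ord0 /\ 0 < b i l)
    (i : 'I_m) (a : 'I_m -> 'rV[R]_(m.+1)) (Ha : admissible sec b a) :
  (* (1) for j <> i, D_{j,i} depends only on a_{-i} *)
  (forall x, strat sec b i x -> forall j, j != i ->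
      D a0 b (upd a i x) j i = D a0 b a j i) /\
  (* (2) *)
  (D a0 b a i i = ((atil a0 b a i i)%:E
                   + \sum_(k | k != i) (atil a0 b a k i)%:E * D a0 b a k i)%E
   /\ (D a0 b a i i < 1%:E)%E) /\
  (* (3) *)
  profit a0 b a i =
    eps b i * (a0 i + \sum_(j | j != i) a0 j * fine (D a0 b a j i))
    / (1 - atil a0 b a i i - \sum_(k | k != i) atil a0 b a k i * fine (D a0 b a k i)) /\
  (* (4) *)
  {within strat sec b i, continuous (fun x => profit a0 b (upd a i x) i)}%classic /\
  quasi_concave_on (strat sec b i) (fun x => profit a0 b (upd a i x) i).
Proof. by apply: main_inner. Qed.
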